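(* Let $U$ be an $N\times N$ unitary matrix with no zero entries, let $S,T$ be $N\times N$ enphased permutation matrices, and let $V=SUT^{-1}$. Write $S=D_S\Pi_S$ and $T=D_T\Pi_T$ with $D_S,D_T$ unitary diagonal and $\Pi_S,\Pi_T$ permutation matrices. Then: (a) $\mathcal I_V=\Phi_{\Pi_S,\Pi_T}\,\mathcal I_U\,\Phi_{\Pi_S,\Pi_T}^{-1}$, i.e. $\mathcal I_U$ and $\mathcal I_V$ are similar with similarity operator $\Phi_{\Pi_S,\Pi_T}$; (b) the operators $\mathcal J_U=\mathcal C_U\mathcal D_U^{-1}$ and $\mathcal J_V=\mathcal C_V\mathcal D_V^{-1}$ satisfy $\mathcal J_V=\Phi_{S,S}\,\mathcal J_U\,\Phi_{S,S}^{-1}$.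
   Context: An enphased permutation matrix is a product of a permutation matrix and a unitary diagonal matrix; such a factorization $S=D\Pi$ is unique. $\circ$ denotes the entrywise (Hadamard) product and $X^*$ the conjugate transpose. For an $N\times N$ unitary $W$ with no zero entries, the linear operators $\mathcal C_W,\mathcal D_W$ on $\mathbb C^{N\times N}$ are $\mathcal C_W(F)=(F\circ W)W^*$ and $\mathcal D_W(F)=W(\overline F\circ W)^*$; both are invertible, and $\mathcal I_W=\mathcal C_W^{-1}\mathcal D_W$ (the Berezin transform). For matrices $A,B$ with $B$ invertible, $\Phi_{A,B}$ is the operator $X\mapsto AXB^{-1}$ on $\mathbb C^{N\times N}$. *)

(* Defs.v *)
(* Complex scalars: an arbitrary numClosedFieldType C
   (e.g. algC, or complex R for R real closed). *)
From HB Require Import structures.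
From mathcomp Require Import all_boot all_order all_algebra all_fingroup.
Set Implicit Arguments. Unset Strict Implicit. Unset Printing Implicit Defensive.
Import Order.TTheory GRing.Theory Num.Theory.
Local Open Scope ring_scope.

Section Defs.
Variables (C : numClosedFieldType) (N : nat).
Implicit Types (A B F W X : 'M[C]_N).

Definition conjm A : 'M[C]_N := map_mx Num.conj A.
Definition ctr A : 'M[C]_N := (conjm A)^T.

Definition hadamard A B : 'M[C]_N := \matrix_(i, j) (A i j * B i j).

Definition unitary_mx W := W *m ctr W = 1%:M.
Definition no_zero_entries W := forall i j, W i j != 0.

(* unitary diagonal matrix given by its diagonal *)
Definition unimod_row (d : 'rV[C]_N) := forall i, `|d 0 i| = 1.
Definition enphased (d : 'rV[C]_N) (s : 'S_N) : 'M[C]_N := diag_mx d *m perm_mx s.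

Definition Cop W F : 'M[C]_N := hadamard F W *m ctr W.
Definition Dop W F : 'M[C]_N := W *m ctr (hadamard (conjm F) W).

(* matrices (acting on mxvec row vectors, X |-> mxvec X *m M) of these
   operators; operator composition f then g corresponds to M_f *m M_g *)
Definition Cmx W : 'M[C]_(N * N) := lin_mx (Cop W).
Definition Dmx W : 'M[C]_(N * N) := lin_mx (Dop W).

(* Berezin transform I_W = C_W^{-1} D_W, and J_W = C_W D_W^{-1} *)
Definition Iop W X : 'M[C]_N := vec_mx (mxvec X *m (Dmx W *m invmx (Cmx W))).
Definition Jop W X : 'M[C]_N := vec_mx (mxvec X *m (invmx (Dmx W) *m Cmx W)).

Definition Phi A B X : 'M[C]_N := A *m X *m invmx B.
Definition Phi_inv A B X : 'M[C]_N := invmx A *m X *m B.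
End Defs.

(* Main.v *)
Require Import Defs.
From HB Require Import structures.
From mathcomp Require Import all_boot all_order all_algebra all_fingroup.
Import Order.TTheory GRing.Theory Num.Theory.
Local Open Scope ring_scope.
Set Implicit Arguments. Unset Strict Implicit.

Section Aux.
Variables (C : numClosedFieldType) (N : nat).
Implicit Types (A B F W X Z : 'M[C]_N).

Lemma hadE A B i j : hadamard A B i j = A i j * B i j.
Proof. by rewrite mxE. Qed.

Lemma ctrE A i j : ctr A i j = (A j i)^*.
Proof. by rewrite !mxE. Qed.

Lemma ctrM A B : ctr (A *m B) = ctr B *m ctr A.
Proof. by rewrite /ctr /conjm map_mxM trmx_mul. Qed.

Lemma ctrK A : ctr (ctr A) = A.
Proof. by apply/matrixP=> i j; rewrite !ctrE conjCK. Qed.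

Lemma conjm_perm (s : 'S_N) : conjm (perm_mx s) = perm_mx s :> 'M[C]_N.
Proof. by rewrite /conjm map_perm_mx. Qed.

Lemma ctr_perm (s : 'S_N) : ctr (perm_mx s) = perm_mx s^-1 :> 'M[C]_N.
Proof. by rewrite /ctr conjm_perm tr_perm_mx. Qed.

Lemma ctr_diag (a : 'rV[C]_N) : ctr (diag_mx a) = diag_mx (map_mx Num.conj a).
Proof. by rewrite /ctr /conjm map_diag_mx tr_diag_mx. Qed.

Lemma perm_unit (s : 'S_N) : perm_mx s *m ctr (perm_mx s) = 1%:M :> 'M[C]_N.
Proof. by rewrite ctr_perm -perm_mxM mulgV perm_mx1. Qed.

Lemma diag_unit (a : 'rV[C]_N) : unimod_row a -> diag_mx a *m ctr (diag_mx a) = 1%:M.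
Proof.
move=> ha; apply/matrixP=> i j; rewrite mul_diag_mx !mxE.
rewrite eq_sym; case: eqP => [->|_]; last by rewrite mulr0n rmorph0 mulr0.
by rewrite !mulr1n -normCK ha expr1n.
Qed.

Lemma unitary_mulC W : W *m ctr W = 1%:M -> ctr W *m W = 1%:M.
Proof. exact: mulmx1C. Qed.

Lemma unitary_inv W : W *m ctr W = 1%:M -> invmx W = ctr W.
Proof.
move=> h; have [uW _] := mulmx1_unit h.
by rewrite -[RHS](mulKmx uW) h mulmx1.
Qed.

Lemma had_perm (s t : 'S_N) A B :
  hadamard (perm_mx s *m A *m perm_mx t) (perm_mx s *m B *m perm_mx t)
  = perm_mx s *m hadamard A B *m perm_mx t.
Proof.
rewrite -!row_permE -[t]invgK -!col_permE.
apply/matrixP=> i j; rewrite !mxE; exact: erefl.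
Qed.

Lemma had_diagl A B (a : 'rV[C]_N) :
  hadamard A (diag_mx a *m B) = diag_mx a *m hadamard A B.
Proof. by apply/matrixP=> i j; rewrite !mul_diag_mx !mxE mulrCA. Qed.

Lemma had_diagr A B (b : 'rV[C]_N) :
  hadamard A (B *m diag_mx b) = hadamard A B *m diag_mx b.
Proof. by apply/matrixP=> i j; rewrite !mul_mx_diag !mxE mulrA. Qed.

Lemma conjmM A B : conjm (A *m B) = conjm A *m conjm B.
Proof. by rewrite /conjm map_mxM. Qed.

End Aux.

Section Lin.
Variables (C : numClosedFieldType) (N : nat).
Implicit Types (A B F W X Z : 'M[C]_N).

Lemma mul_vec_linF (f : 'M[C]_N -> 'M[C]_N) (fL : linear f) A :
  mxvec A *m lin_mx f = mxvec (f A).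
Proof.
pose g : {linear 'M[C]_N -> 'M[C]_N} := HB.pack f (GRing.isLinear.Build _ _ _ _ f fL).
exact: (mul_vec_lin g A).
Qed.

Lemma Cop_lin W : linear (Cop W).
Proof.
move=> a F G; rewrite /Cop.
have -> : hadamard (a *: F + G) W = a *: hadamard F W + hadamard G W.
  by apply/matrixP=> i j; rewrite !mxE mulrDl mulrA.
by rewrite mulmxDl scalemxAl.
Qed.

Lemma DopE W F : Dop W F = W *m (hadamard F (conjm W))^T.
Proof.
rewrite /Dop; congr (_ *m _); apply/matrixP=> i j.
by rewrite !mxE rmorphM /= conjCK.
Qed.

Lemma Dop_lin W : linear (Dop W).
Proof.
move=> a F G; rewrite !DopE.
have -> : hadamard (a *: F + G) (conjm W) = a *: hadamard F (conjm W) + hadamard G (conjm W).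
  by apply/matrixP=> i j; rewrite !mxE mulrDl mulrA.
by rewrite linearD linearZ /= mulmxDr scalemxAr.
Qed.

End Lin.

Section Spec.
Variables (C : numClosedFieldType) (N : nat).
Implicit Types (A B F W X Y Z : 'M[C]_N).

Lemma lin_inj (f : 'M[C]_N -> 'M[C]_N) (fL : linear f) :
  (forall F, f F = 0 -> F = 0) -> injective f.
Proof.
move=> h x y e.
pose g : {linear 'M[C]_N -> 'M[C]_N} := HB.pack f (GRing.isLinear.Build _ _ _ _ f fL).
have e2 : f (x - y) = f x - f y := linearB g x y.
by apply/eqP; rewrite -subr_eq0; apply/eqP; apply: h; rewrite e2 e subrr.
Qed.

Lemma lin_unit (f : 'M[C]_N -> 'M[C]_N) (fL : linear f) :
  (forall F, f F = 0 -> F = 0) -> lin_mx f \in unitmx.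
Proof.
move=> h; rewrite -row_free_unit; apply: inj_row_free => v.
rewrite -[v]vec_mxK mul_vec_linF // => e.
have : vec_mx (mxvec (f (vec_mx v))) = vec_mx 0 by rewrite e.
by rewrite mxvecK linear0 => /h ->; rewrite linear0.
Qed.

Lemma ctr0 : ctr (0 : 'M[C]_N) = 0.
Proof. by apply/matrixP=> i j; rewrite !mxE rmorph0. Qed.

Lemma Cop0 W F : unitary_mx W -> no_zero_entries W -> Cop W F = 0 -> F = 0.
Proof.
move=> uW nz; rewrite /Cop => e.
have h : hadamard F W = 0.
  by rewrite -[hadamard F W]mulmx1 -(unitary_mulC uW) mulmxA e mul0mx.
apply/matrixP=> i j; have := congr1 (fun M : 'M[C]_N => M i j) h.
by rewrite !mxE => /eqP; rewrite mulf_eq0 (negPf (nz i j)) orbF => /eqP.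
Qed.

Lemma Dop0 W F : unitary_mx W -> no_zero_entries W -> Dop W F = 0 -> F = 0.
Proof.
move=> uW nz; rewrite /Dop => e.
have h : ctr (hadamard (conjm F) W) = 0.
  by rewrite -[ctr _]mul1mx -(unitary_mulC uW) -mulmxA e mulmx0.
have h2 : hadamard (conjm F) W = 0 by rewrite -[LHS]ctrK h ctr0.
apply/matrixP=> i j; have := congr1 (fun M : 'M[C]_N => M i j) h2.
rewrite !mxE => /eqP; rewrite mulf_eq0 (negPf (nz i j)) orbF conjC_eq0.
by move/eqP.
Qed.

Lemma Iop_spec W X : unitary_mx W -> no_zero_entries W ->
  Cop W (Iop W X) = Dop W X.
Proof.
move=> uW nz.
have uC : Cmx W \in unitmx by apply: lin_unit; [apply: Cop_lin | move=> F; apply: Cop0].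
rewrite -[Cop W _]mxvecK -mul_vec_linF; last exact: Cop_lin.
rewrite /Iop vec_mxK mulmxA mulmxKV // /Dmx mul_vec_linF ?mxvecK //.
exact: Dop_lin.
Qed.

Lemma Cop_inj W : unitary_mx W -> no_zero_entries W -> injective (Cop W).
Proof. by move=> uW nz; apply: lin_inj; [apply: Cop_lin | move=> F; apply: Cop0]. Qed.

Lemma Dop_inj W : unitary_mx W -> no_zero_entries W -> injective (Dop W).
Proof. by move=> uW nz; apply: lin_inj; [apply: Dop_lin | move=> F; apply: Dop0]. Qed.

Lemma Jop_spec W X : unitary_mx W -> no_zero_entries W ->
  exists K, Dop W K = X /\ Jop W X = Cop W K.
Proof.
move=> uW nz.
have uD : Dmx W \in unitmx by apply: lin_unit; [apply: Dop_lin | move=> F; apply: Dop0].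
exists (vec_mx (mxvec X *m invmx (Dmx W))); split.
  rewrite -[Dop W _]mxvecK -mul_vec_linF; last exact: Dop_lin.
  by rewrite vec_mxK mulmxKV // mxvecK.
rewrite /Jop mulmxA -[mxvec X *m _]vec_mxK mul_vec_linF //; last exact: Cop_lin.
rewrite mxvecK; exact: mxvecK.
Qed.

End Spec.

Section Key.
Variables (C : numClosedFieldType) (N : nat).
Implicit Types (A B F W X Y Z : 'M[C]_N).
Variables (a b : 'rV[C]_N) (s t : 'S_N) (U : 'M[C]_N).
Hypothesis (ha : unimod_row a) (hb : unimod_row b).
Let P : 'M[C]_N := perm_mx s.
Let Q : 'M[C]_N := perm_mx t.
Let V := diag_mx a *m P *m U *m Q *m diag_mx b.

Lemma hadV Z : hadamard (P *m Z *m Q) V = diag_mx a *m P *m hadamard Z U *m Q *m diag_mx b.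
Proof.
rewrite /V had_diagr; congr (_ *m _).
have -> : diag_mx a *m P *m U *m Q = diag_mx a *m (P *m U *m Q) by rewrite !mulmxA.
by rewrite had_diagl had_perm !mulmxA.
Qed.

Lemma cancelE Y : Y *m diag_mx b *m ctr (diag_mx b) = Y.
Proof. by rewrite -mulmxA diag_unit // mulmx1. Qed.
Lemma cancelQ Y : Y *m Q *m ctr Q = Y.
Proof. by rewrite -mulmxA perm_unit mulmx1. Qed.

Lemma keyC Z : Cop V (P *m Z *m Q) = (diag_mx a *m P) *m Cop U Z *m ctr (diag_mx a *m P).
Proof.
rewrite /Cop hadV /V !ctrM !mulmxA cancelE cancelQ.
by [].
Qed.

Lemma keyD Z : Dop V (P *m Z *m Q) = (diag_mx a *m P) *m Dop U Z *m ctr (diag_mx a *m P).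
Proof.
rewrite /Dop !conjmM /P /Q !conjm_perm -/P -/Q hadV /V !ctrM !mulmxA cancelE cancelQ.
by [] || rewrite !mulmxA.
Qed.


Lemma V_unitary : unitary_mx U -> unitary_mx V.
Proof.
rewrite /unitary_mx /V => uU; rewrite !ctrM !mulmxA cancelE cancelQ.
rewrite -(mulmxA _ U) uU mulmx1 -(mulmxA _ P) perm_unit mulmx1.
exact: diag_unit.
Qed.

Lemma V_nz : no_zero_entries U -> no_zero_entries V.
Proof.
move=> nz i j.
have -> : V = diag_mx a *m (P *m U *m Q) *m diag_mx b by rewrite /V !mulmxA.
rewrite mul_mx_diag mul_diag_mx /P /Q -row_permE -[t]invgK -col_permE !mxE.
have nz0 (c : 'rV[C]_N) k : unimod_row c -> c 0 k != 0.
  by move=> hc; apply/eqP=> e; have := hc k; rewrite e normr0 => /eqP; rewrite eq_sym oner_eq0.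
by rewrite !mulf_neq0 ?nz0.
Qed.

End Key.

Lemma unimod_conj (C : numClosedFieldType) (N : nat) (d : 'rV[C]_N) :
  unimod_row d -> unimod_row (map_mx Num.conj d).
Proof. by move=> h i; rewrite mxE norm_conjC h. Qed.

Lemma cancU (C : numClosedFieldType) (N : nat) (A Y : 'M[C]_N) :
  A *m ctr A = 1%:M -> A *m (ctr A *m Y *m A) *m ctr A = Y.
Proof. by move=> h; rewrite !mulmxA h mul1mx -mulmxA h mulmx1. Qed.

Theorem corollary3p5 (C : numClosedFieldType) (N : nat) (U : 'M[C]_N)
  (dS dT : 'rV[C]_N) (sS sT : 'S_N) :
  unitary_mx U -> no_zero_entries U ->
  unimod_row dS -> unimod_row dT ->
  let S := enphased dS sS in
  let T := enphased dT sT in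
  let V := S *m U *m invmx T in
  (forall X : 'M[C]_N,
     Iop V X = Phi (perm_mx sS) (perm_mx sT)
                   (Iop U (Phi_inv (perm_mx sS) (perm_mx sT) X)))
  /\
  (forall X : 'M[C]_N,
     Jop V X = Phi S S (Jop U (Phi_inv S S X))).
Proof.
move=> uU nzU hS hT S T V.
have hT' := unimod_conj hT.
have uT : T *m ctr T = 1%:M.
  by rewrite /T /enphased ctrM mulmxA -(mulmxA _ (perm_mx sT)) perm_unit mulmx1 diag_unit.
have uS : S *m ctr S = 1%:M.
  by rewrite /S /enphased ctrM mulmxA -(mulmxA _ (perm_mx sS)) perm_unit mulmx1 diag_unit.
have eV : V = diag_mx dS *m perm_mx sS *m U *m perm_mx sT^-1 *m diag_mx (map_mx Num.conj dT).
  by rewrite /V (unitary_inv uT) /T /enphased ctrM ctr_perm ctr_diag /S /enphased !mulmxA.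
have uV : unitary_mx V by rewrite eV; apply: V_unitary.
have nzV : no_zero_entries V by rewrite eV; apply: V_nz.
have invP (r : 'S_N) : invmx (perm_mx r) = perm_mx r^-1 :> 'M[C]_N.
  by rewrite (unitary_inv (@perm_unit C N r)) ctr_perm.
split=> X.
  rewrite /Phi /Phi_inv !invP.
  set Y := perm_mx sS^-1 *m X *m perm_mx sT.
  apply: (Cop_inj uV nzV); rewrite Iop_spec // eV.
  rewrite keyC // Iop_spec // -(@keyD C N dS _ sS sT^-1 U hT') /Y.
  congr (Dop _ _).
  by rewrite !mulmxA -perm_mxM mulgV perm_mx1 mul1mx -mulmxA -perm_mxM mulgV perm_mx1 mulmx1.
rewrite /Phi /Phi_inv (unitary_inv uS).
have [K [eK ->]] := Jop_spec (ctr S *m X *m S) uU nzU.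
have [K' [eK' ->]] := Jop_spec X uV nzV.
have -> : K' = perm_mx sS *m K *m perm_mx sT^-1.
  apply: (Dop_inj uV nzV); rewrite eK' eV keyD // eK.
  exact: (esym (cancU X uS)).
by rewrite eV keyC.
Qed.
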